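(* Let $\mathbb{X}$ be an infinite-dimensional (real or complex) Banach space and let $\mathcal{B}=(\mathbf{e}_n)_{n=1}^\infty$ be a semi-normalized quasi-greedy basis of $\mathbb{X}$. Then $C_w=1$ (i.e. $\|\mathcal{G}_N(x)\|\le\|x\|$ for every $x\in\mathbb{X}$, every $N\in\mathbb{N}$ and every choice of greedy set $\Lambda_N(x)$) if and only if $\mathcal{B}$ is unconditional with suppression unconditional constant $K_{su}=1$ (i.e. $\|P_A(x)\|\le\|x\|$ for every $x\in\mathbb{X}$ and every $A\subseteq\mathbb{N}$).
   Context: A basis $(\mathbf{e}_n)_{n=1}^\infty$ of a Banach space $\mathbb{X}$ is a Schauder basis; it is semi-normalized if $0<\inf_n\|\mathbf{e}_n\|\le\sup_n\|\mathbf{e}_n\|<\infty$. Let $(\mathbf{e}_n^* )_{n=1}^\infty$ be the biorthogonal (coordinate) functionals, so $x=\sum_n \mathbf{e}_n^*(x)\mathbf{e}_n$. For $x\in\mathbb{X}$ and $N\in\mathbb{N}$, a greedy set $\Lambda_N(x)$ is any set of $N$ indices with $\min\{|\mathbf{e}_j^*(x)|: j\in\Lambda_N(x)\}\ge\max\{|\mathbf{e}_j^*(x)|: j\notin\Lambda_N(x)\}$, and the greedy operator is $\mathcal{G}_N(x)=\sum_{j\in\Lambda_N(x)}\mathbf{e}_j^*(x)\mathbf{e}_j$. The basis is quasi-greedy if there is a constant $C$ with $\|\mathcal{G}_N(x)\|\le C\|x\|$ for all $x$, $N$ and all choices of greedy sets; $C_w$ denotes the smallest such $C$, and $C_t$ denotes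 the smallest constant $\tilde C$ with $\|x-\mathcal{G}_N(x)\|\le\tilde C\|x\|$ for all $x$, $N$ and choices of greedy sets. For $A\subseteq\mathbb{N}$, $P_A(x)=\sum_{n\in A}\mathbf{e}_n^*(x)\mathbf{e}_n$. The basis is unconditional if every expansion $\sum_n\mathbf{e}_n^*(x)\mathbf{e}_n$ converges to $x$ in any order; equivalently the $P_A$ are uniformly bounded, and the suppression unconditional constant $K_{su}$ is the smallest $K$ with $\|P_A(x)\|\le K\|x\|$ for all $x\in\mathbb{X}$, $A\subseteq\mathbb{N}$. *)

(* Defs.v *)
From HB Require Import structures.
From mathcomp Require Import all_boot all_order all_algebra.
From mathcomp Require Import all_classical all_reals all_analysis.
From mathcomp Require Export complex.
Set Implicit Arguments. Unset Strict Implicit. Unset Printing Implicit Defensive.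
Import Order.TTheory GRing.Theory Num.Theory.
Import numFieldNormedType.Exports.
Local Open Scope classical_set_scope.
Local Open Scope ring_scope.

Section Greedy.
Variables (K : numFieldType) (X : normedModType K).
Implicit Types (e : nat -> X) (es : nat -> X -> K).

Definition psum e (a : nat -> K) : nat -> X :=
  fun N => \sum_(0 <= n < N) a n *: e n.

Definition schauder_basis e es : Prop :=
  forall x : X,
    psum e (fun n => es n x) @ \oo --> x /\
    (forall a : nat -> K, psum e a @ \oo --> x -> a = (fun n => es n x)).

Definition semi_normalized e : Prop :=
  exists c C : K, 0 < c /\ forall n, c <= `|e n| <= C.

Definition greedy_set es (x : X) (N : nat) (s : seq nat) : Prop :=
  uniq s /\ size s = N /\
  forall i j, i \in s -> j \notin s -> `|es j x| <= `|es i x|.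

Definition greedy_op e es (x : X) (s : seq nat) : X :=
  \sum_(j <- s) es j x *: e j.

Definition quasi_greedy e es : Prop :=
  exists C : K, forall (x : X) (N : nat) (s : seq nat),
    greedy_set es x N s -> `|greedy_op e es x s| <= C * `|x|.

Definition Cw_one e es : Prop :=
  forall (x : X) (N : nat) (s : seq nat),
    greedy_set es x N s -> `|greedy_op e es x s| <= `|x|.

Definition unconditional e es : Prop :=
  forall (x : X) (sigma : nat -> nat), bijective sigma ->
    psum (e \o sigma) (fun n => es (sigma n) x) @ \oo --> x.

Definition proj_set e es (A : set nat) (x : X) : X :=
  limn (psum e (fun n => if `[< A n >] then es n x else 0)).

Definition Ksu_one e es : Prop :=
  forall (x : X) (A : set nat), `|proj_set e es A x| <= `|x|.

End Greedy.

(* Main.v *)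
Require Import Defs.
From HB Require Import structures.
From mathcomp Require Import all_boot all_order all_algebra.
From mathcomp Require Import all_classical all_reals all_analysis.
From mathcomp Require Import complex.
Import Order.TTheory GRing.Theory Num.Theory.
Import numFieldNormedType.Exports.
Local Open Scope classical_set_scope.
Local Open Scope ring_scope.

Section Gen.
Variables (K : numFieldType) (X : normedModType K) (e : nat -> X)
  (es : nat -> X -> K).
Hypothesis Hb : schauder_basis e es.

Lemma psum_cst a M : (forall n, (M <= n)%N -> a n = 0) ->
  forall N, (M <= N)%N -> psum e a N = psum e a M.
Proof.
move=> a0 N MN; rewrite /psum [LHS](@big_cat_nat _ _ _ M) //=.
rewrite [X in _ + X]big_nat_cond [X in _ + X]big1 ?addr0 // => n /andP[/andP[Mn _] _].
by rewrite a0 // scale0r.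
Qed.

Lemma es_fin a M : (forall n, (M <= n)%N -> a n = 0) ->
  forall n, es n (psum e a M) = a n.
Proof.
move=> a0 n.
have H : psum e a @ \oo --> psum e a M.
  by apply: cvg_near_cst; exists M => // N /= MN; exact: psum_cst.
by have := congr1 (fun f => f n) ((Hb _).2 a H) => /= ->.
Qed.

Lemma es_lin x y k n : es n (x + k *: y) = es n x + k * es n y.
Proof.
have H : psum e (fun n => es n x + k * es n y) @ \oo --> x + k *: y.
  have -> : psum e (fun n => es n x + k * es n y) =
      (fun N => psum e (fun n => es n x) N + k *: psum e (fun n => es n y) N).
    apply: funext => N; rewrite /psum scaler_sumr -big_split /=.
    by apply: eq_bigr => i _; rewrite scalerDl scalerA.
  apply: cvgD; first exact: (Hb x).1.
  by apply: cvgZ; [exact: cvg_cst | exact: (Hb y).1].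
by have := congr1 (fun f => f n) ((Hb _).2 _ H) => /= <-.
Qed.

Lemma sum_proj s x M : uniq s -> (forall j, j \in s -> (j < M)%N) ->
  greedy_op e es x s = psum e (fun n => if n \in s then es n x else 0) M.
Proof.
move=> us sM; rewrite /greedy_op /psum.
under [RHS]eq_bigr => n _ do rewrite (fun_if (fun c => c *: e n)) scale0r.
rewrite -big_mkcond /= -[RHS]big_filter.
apply: perm_big; apply: uniq_perm => //.
  by rewrite filter_uniq // iota_uniq.
move=> j; rewrite mem_filter mem_index_iota /=.
by case: (boolP (j \in s)) => //= /sM ->.
Qed.

Lemma ex_bnd (s : seq nat) : exists M, forall j, j \in s -> (j < M)%N.
Proof.
elim: s => [|a s [M HM]]; first by exists 0%N.
exists (maxn M a.+1) => j; rewrite in_cons => /orP[/eqP ->|/HM jM].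
  by rewrite leq_max leqnn orbT.
by rewrite leq_max jM.
Qed.

Lemma es_greedy s x n : uniq s ->
  es n (greedy_op e es x s) = if n \in s then es n x else 0.
Proof.
move=> us; have [M HM] := ex_bnd s.
rewrite (@sum_proj s x M us HM) es_fin // => m Mm.
by case: ifP => // /HM; rewrite ltnNge Mm.
Qed.


Lemma coef_bounded : semi_normalized e ->
  forall x, exists B, 0 <= B /\ forall n, `|es n x| <= B.
Proof.
move=> [c [C [c0 hc]]] x.
have := cvg_seq_bounded (cvgP _ (Hb x).1).
move=> [M0 [M0r HM0]].
have M0lt : M0 < `|M0| + 1 by rewrite (le_lt_trans (real_ler_norm M0r)) // ltrDl.
have HS : forall n, `|psum e (fun n => es n x) n| <= `|M0| + 1.
  by move=> n; exact: (HM0 _ M0lt).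
have M0' : 0 <= `|M0| + 1 :> K by rewrite addr_ge0.
exists ((`|M0| + 1 + (`|M0| + 1)) / c); split.
  by rewrite divr_ge0 ?addr_ge0 // ltW.
move=> n; rewrite ler_pdivlMr //.
have E : es n x *: e n = psum e (fun n => es n x) n.+1 - psum e (fun n => es n x) n.
  by rewrite /psum big_nat_recr //= addrC addrK.
apply: (le_trans _ (le_trans (ler_normB _ _) (lerD (HS n.+1) (HS n)))).
rewrite -E normrZ ler_wpM2l //.
by case/andP: (hc n).
Qed.

Lemma FB : semi_normalized e -> Cw_one e es ->
  forall x s, uniq s -> `|greedy_op e es x s| <= `|x|.
Proof.
move=> sn Cw x s0 us0.
have -> : greedy_op e es x s0 =
    greedy_op e es x [seq j <- s0 | es j x != 0].
  rewrite /greedy_op big_filter [RHS]big_mkcond /=; apply: eq_bigr => j _.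
  by case: eqP => // ->; rewrite scale0r.
have : uniq [seq j <- s0 | es j x != 0] by rewrite filter_uniq.
have : forall j, j \in [seq j <- s0 | es j x != 0] -> es j x != 0.
  by move=> j; rewrite mem_filter => /andP[].
move: [seq j <- s0 | es j x != 0] => s nz us.
have [B [B0 HB]] := coef_bounded sn x.
set u := greedy_op e es x s.
set t := B * \sum_(j <- s) `|es j x|^-1.
have t0 : 0 <= t by rewrite mulr_ge0 // sumr_ge0 // => j _; rewrite invr_ge0.
set y := x + t *: u.
have ey : forall n, es n y = if n \in s then (1 + t) * es n x else es n x.
  move=> n; rewrite /y es_lin /u es_greedy //.
  by case: ifP => _; rewrite ?mulr0 ?addr0 // mulrDl mul1r mulrC.
have gs : greedy_set es y (size s) s.
  split=> //; split=> // i j si sj.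
  rewrite !ey si (negbTE sj) normrM ger0_norm ?addr_ge0 //.
  apply: (le_trans (HB j)); rewrite mulrDl mul1r.
  apply: ler_wpDl => //; rewrite /t -mulrA.
  have ai : 0 < `|es i x| by rewrite normr_gt0 nz.
  rewrite -{1}(mulr1 B) ler_wpM2l //.
  rewrite (bigD1_seq i) //= mulrDl mulVf ?normr_eq0 ?nz //.
  by rewrite lerDl mulr_ge0 // sumr_ge0 // => k _; rewrite invr_ge0.
have Hg : greedy_op e es y s = (1 + t) *: u.
  rewrite /greedy_op /u /greedy_op scaler_sumr.
  by apply: eq_big_seq => j sj; rewrite ey sj scalerA.
have := Cw _ _ _ gs; rewrite Hg normrZ ger0_norm ?addr_ge0 //.
move=> /le_trans /(_ (ler_normD _ _)); rewrite normrZ ger0_norm //.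
by rewrite mulrDl mul1r lerD2r.
Qed.

Lemma ex_N0 (g : nat -> nat) M : exists N0, forall k, (k < M)%N -> (g k < N0)%N.
Proof.
elim: M => [|M [N0 HN0]]; first by exists 0%N.
exists (maxn N0 (g M).+1) => k; rewrite ltnS leq_eqVlt => /orP[/eqP ->|/HN0 h].
  by rewrite leq_max leqnn orbT.
by rewrite leq_max h.
Qed.

Lemma uncond_of : semi_normalized e -> Cw_one e es -> unconditional e es.
Proof.
move=> sn Cw x sigma [g sg gs].
have Tsum : forall N, psum (e \o sigma) (fun n => es (sigma n) x) N =
    greedy_op e es x (map sigma (index_iota 0 N)).
  by move=> N; rewrite /psum /greedy_op big_map.
apply/cvgrPdist_le => eps eps0.
have e2 : 0 < eps / 2 by rewrite divr_gt0 // ltr0n.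
have := (cvgrPdist_le _ _).1 (Hb x).1 (eps / 2) e2.
case=> M _ HM; have {HM}HM := HM M (leqnn M).
have [N0 HN0] := ex_N0 g M.
exists N0 => // N /= N0N.
rewrite Tsum.
set B := map sigma (index_iota 0 N).
have uB : uniq B by rewrite map_inj_uniq ?iota_uniq //; exact: (can_inj sg).
have Bcov : forall k, (k < M)%N -> k \in B.
  move=> k kM; rewrite -[k]gs map_f // mem_index_iota /=.
  exact: (leq_trans (HN0 k kM) N0N).
set SM := psum e (fun n => es n x) M in HM *.
have eSM : forall n, es n SM = if (n < M)%N then es n x else 0.
  move=> n; have -> : SM = psum e (fun n => if (n < M)%N then es n x else 0) M.
    by rewrite /SM /psum; apply: eq_big_nat => i /andP[_ ->].
  by rewrite es_fin // => m; rewrite ltnNge => ->.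
set r := x - SM in HM *.
have Id : greedy_op e es r B = greedy_op e es x B - SM.
  have -> : r = x + (-1) *: SM by rewrite scaleN1r.
  rewrite /greedy_op.
  under eq_bigr => j _ do rewrite es_lin eSM scalerDl mulN1r scaleNr.
  rewrite big_split /= sumrN; congr (_ - _).
  under eq_bigr => j _ do rewrite (fun_if (fun c => c *: e j)) scale0r.
  rewrite -big_mkcond -big_filter /SM /psum.
  apply: perm_big; apply: uniq_perm; first by rewrite filter_uniq.
    by rewrite iota_uniq.
  move=> j; rewrite mem_filter mem_index_iota /=.
  by case: (ltnP j M) => //= /Bcov ->.
have -> : x - greedy_op e es x B = r - greedy_op e es r B.
  by rewrite Id /r opprB addrA subrK.
apply: (le_trans (ler_normB _ _)).
rewrite [eps]splitr; apply: lerD => //.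
apply: (le_trans (FB sn Cw r B uB)). exact: HM.
Qed.

End Gen.

Section Comp.
Variables (K : numFieldType) (X : completeNormedModType K) (e : nat -> X)
  (es : nat -> X -> K).
Hypothesis Hb : schauder_basis e es.

Lemma ksu_of : semi_normalized e -> Cw_one e es -> Ksu_one e es.
Proof.
move=> sn Cw x A.
pose b := fun n => if `[< A n >] then es n x else 0.
pose S := psum e (fun n => es n x).
have Diff : forall M N, (M <= N)%N ->
    `|psum e b N - psum e b M| <= `|S N - S M|.
  move=> M N MN.
  pose c := fun n => if (M <= n < N)%N then es n x else 0.
  pose z := psum e c N.
  have Hz : z = S N - S M.
    rewrite /z /S /psum [LHS](@big_cat_nat _ _ _ M) //= [in RHS](@big_cat_nat _ _ _ M 0 N) //=.
    rewrite [X in X + _]big_nat_cond [X in X + _]big1 ?add0r; last first.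
      by move=> n /andP[/andP[_ nM] _]; rewrite /c leqNgt nM scale0r.
    rewrite [RHS]addrC addKr; apply: eq_big_nat => n /andP[Mn nN].
    by rewrite /c Mn nN.
  have ez : forall n, (M <= n < N)%N -> es n z = es n x.
    move=> n Hn; rewrite /z es_fin // ?/c ?Hn // => m Nm.
    by rewrite ltnNge Nm andbF.
  have -> : psum e b N - psum e b M =
      greedy_op e es z [seq n <- index_iota M N | `[< A n >]].
    rewrite /psum (@big_cat_nat _ _ _ M 0 N) //= [LHS]addrC addKr.
    rewrite /greedy_op big_filter [RHS]big_mkcond.
    apply: eq_big_seq => n; rewrite mem_index_iota => Hn.
    by rewrite ez // /b; case: ifP => _ //; rewrite scale0r.
  rewrite -Hz; apply: FB => //.
  by rewrite filter_uniq // iota_uniq.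
have Diff' : forall M N, `|psum e b M - psum e b N| <= `|S M - S N|.
  move=> M N; case: (leqP M N) => MN.
    by rewrite distrC [X in _ <= X]distrC; exact: Diff.
  exact: Diff (ltnW MN).
have cu : cvg (psum e b @ \oo).
  apply/cauchy_cvgP/cauchy_ballP => eps eps0.
  have := (cauchy_ballP _).2 (@cvg_cauchy _ _ _ (cvgP _ (Hb x).1)) eps eps0.
  move=> /(_ _ _) H.
  rewrite !near_simpl /= in H *.
  apply: filterS H => -[M N] /=; rewrite -!ball_normE /ball_ /=.
  exact: le_lt_trans (Diff' M N).
have Pu : forall N, `|psum e b N| <= `|x|.
  move=> N; have -> : psum e b N =
      greedy_op e es x [seq n <- index_iota 0 N | `[< A n >]].
    rewrite /greedy_op big_filter big_mkcond /psum; apply: eq_bigr => n _.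
    by rewrite /b; case: ifP => _ //; rewrite scale0r.
  by apply: FB => //; rewrite filter_uniq // iota_uniq.
rewrite /proj_set -/b.
apply/ler_addgt0Pr => eps eps0.
have := (cvgrPdist_le _ _).1 cu eps eps0.
case=> N _ HN; have {HN}HN := HN N (leqnn N).
rewrite -(subrK (psum e b N) (limn (psum e b))).
apply: (le_trans (ler_normD _ _)); rewrite addrC.
exact: lerD.
Qed.

End Comp.

Lemma cw_of (K : numFieldType) (X : normedModType K) (e : nat -> X)
  (es : nat -> X -> K) : Ksu_one e es -> Cw_one e es.
Proof.
move=> Ks x N s [us _].
have [M HM] := ex_bnd s.
have := Ks x [set j | j \in s].
suff -> : proj_set e es [set j | j \in s] x = greedy_op e es x s by [].
rewrite (@sum_proj K X e es s x M us HM) /proj_set.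
have -> : (fun n => if `[< [set j | j \in s] n >] then es n x else 0) =
    (fun n => if n \in s then es n x else 0).
  by apply: funext => n /=; rewrite asboolb.
apply: lim_near_cst; first exact: norm_hausdorff.
exists M => // n /= Mn.
apply: psum_cst => // m Mm; case: ifP => // /HM.
by rewrite ltnNge Mm.
Qed.

Lemma main_gen (K : numFieldType) (X : completeNormedModType K) (e : nat -> X)
  (es : nat -> X -> K) : schauder_basis e es -> semi_normalized e ->
  (Cw_one e es <-> unconditional e es /\ Ksu_one e es).
Proof.
move=> Hb sn; split.
  by move=> Cw; split; [exact: uncond_of | exact: ksu_of].
by move=> [_ Ks]; exact: cw_of.
Qed.

Theorem theorem2p1 :
  (forall (R : realType) (X : completeNormedModType R)
          (e : nat -> X) (es : nat -> X -> R),
      schauder_basis e es -> semi_normalized e -> quasi_greedy e es ->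
      (Cw_one e es <-> unconditional e es /\ Ksu_one e es)) /\
  (forall (R : realType) (X : completeNormedModType R[i])
          (e : nat -> X) (es : nat -> X -> R[i]),
      schauder_basis e es -> semi_normalized e -> quasi_greedy e es ->
      (Cw_one e es <-> unconditional e es /\ Ksu_one e es)).
Proof.
split=> R X e es Hb sn _; exact: main_gen.
Qed.
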